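(* Let $\mathcal{G}$ be a groupoid and $\mathbb{K}$ a field. A map $\sigma :\mathcal{G} \times\mathcal{G} \to \mathbb{K}$ such that $\sigma(e,e) = 1$ for all $e \in \mathcal{G}_0$ is an idempotent factor set (i.e. an idempotent element of $pm(\mathcal{G})$) if and only if its values are $0$ and $1$ and for all $(x,y)\in\mathrm{dom}\,\sigma$, $$(xy,y^{-1}),\ (y^{-1},x^{-1}),\ (x,d(x)) \in \mathrm{dom}\,\sigma.$$
   Context: A groupoid is a nonempty set $\mathcal{G}$ with a partial associative product, each $g$ having right identity $d(g)=g^{-1}g$, left identity $r(g)=gg^{-1}$ and inverse $g^{-1}$; $xy$ is defined ($\exists xy$) iff $d(x)=r(y)$; $\mathcal{G}_0$ identities, $\mathcal{G}^2$ composable pairs. A $\mathbb{K}$-semigroup is a semigroup $S$ with zero with scalar action satisfying $\alpha(\beta x)=(\alpha\beta)x$, $1x=x$, $\alpha(xy)=(\alpha x)y=x(\alpha y)$, $0x=0$; $\mathbb{K}$-cancellative if $\alpha x=\beta x$, $x\ne0$ imply $\alpha=\beta$. With $\xi:S\to S/\lambda$ the quotient by $x\lambda y\iff x=\alpha y$ for some $\alpha\in\mathbb{K}^*$, a partial projective representation of $\mathcal{G}$ on a $\mathbb{K}$-cancellative semigroup $S$ is $\Gamma:\mathcal{G}\to S$ such that whenever $\exists xy$: $\xi\Gamma(x^{-1})\xi\Gamma(x)\xi\Gamma(y)=\xi\Gamma(x^{-1})\xi\Gamma(xy)$ and $\xi\Gamma(x)\xi\Gamma(y)\xi\Gamma(y^{-1})=\xi\Gamma(xy)\xi\Gamma(y^{-1})$.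 Standing assumption: $\Gamma(r(x))\Gamma(x)=\Gamma(x)=\Gamma(x)\Gamma(d(x))$ for all $x$. Its factor set is the unique partial map $\sigma$ with domain $\{(x,y)\in\mathcal{G}^2:\Gamma(x)\Gamma(y)\ne0\}$, values in $\mathbb{K}^*$, satisfying $\Gamma(x^{-1})\Gamma(x)\Gamma(y)=\Gamma(x^{-1})\Gamma(xy)\sigma(x,y)$ and $\Gamma(x)\Gamma(y)\Gamma(y^{-1})=\Gamma(xy)\Gamma(y^{-1})\sigma(x,y)$ on its domain; it is regarded as a map $\mathcal{G}\times\mathcal{G}\to\mathbb{K}$ by setting it $0$ outside its domain, so $\mathrm{dom}\,\sigma=\{(x,y):\sigma(x,y)\neq0\}$. $pm(\mathcal{G})$ is the set of all such factor sets, a commutative semigroup under pointwise multiplication. *)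

(* Defs.v *)
From HB Require Import structures.
From mathcomp Require Import all_boot all_algebra.
Set Implicit Arguments. Unset Strict Implicit. Unset Printing Implicit Defensive.
Import GRing.Theory.
Local Open Scope ring_scope.

(* A groupoid: nonempty carrier with a product (meaningful only on composable
   pairs) and an inverse.  d x := x^{-1} x, r x := x x^{-1}, and the product
   x y is defined iff d x = r y. *)
Record groupoid : Type := Groupoid {
  gcar :> Type;
  gpt : gcar;
  gmul : gcar -> gcar -> gcar;
  ginv : gcar -> gcar;
  ginvK : forall x, ginv (ginv x) = x;
  gassoc : forall x y z, gmul (ginv x) x = gmul y (ginv y) ->
     gmul (ginv y) y = gmul z (ginv z) ->
     gmul (gmul x y) z = gmul x (gmul y z);
  gd_mul : forall x y, gmul (ginv x) x = gmul y (ginv y) ->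
     gmul (ginv (gmul x y)) (gmul x y) = gmul (ginv y) y;
  gr_mul : forall x y, gmul (ginv x) x = gmul y (ginv y) ->
     gmul (gmul x y) (ginv (gmul x y)) = gmul x (ginv x);
  gr_d : forall x, let e := gmul (ginv x) x in gmul e (ginv e) = e;
  gd_r : forall x, let e := gmul x (ginv x) in gmul (ginv e) e = e;
  gmul_d : forall x, gmul x (gmul (ginv x) x) = x;
  gr_mul_x : forall x, gmul (gmul x (ginv x)) x = x;
  gcancel_l : forall x y, gmul (ginv x) x = gmul y (ginv y) ->
     gmul (ginv x) (gmul x y) = y;
  gcancel_r : forall x y, gmul (ginv x) x = gmul y (ginv y) ->
     gmul (gmul x y) (ginv y) = x
}.

Section GroupoidDefs.
Variable G : groupoid.
Definition gd (x : G) : G := gmul (ginv x) x.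
Definition gr (x : G) : G := gmul x (ginv x).
Definition composable (x y : G) : Prop := gd x = gr y.
Definition identity_elt (e : G) : Prop := exists x : G, e = gd x.
End GroupoidDefs.

Record ksemigroup (K : fieldType) : Type := KSemigroup {
  scar :> Type;
  smul : scar -> scar -> scar;
  szero : scar;
  sscale : K -> scar -> scar;
  smulA : forall x y z, smul (smul x y) z = smul x (smul y z);
  smul0l : forall x, smul szero x = szero;
  smul0r : forall x, smul x szero = szero;
  sscaleA : forall (a b : K) x, sscale a (sscale b x) = sscale (a * b) x;
  sscale1 : forall x, sscale 1 x = x;
  sscale_mull : forall (a : K) x y, sscale a (smul x y) = smul (sscale a x) y;
  sscale_mulr : forall (a : K) x y, sscale a (smul x y) = smul x (sscale a y);
  sscale0 : forall x, sscale 0 x = szero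
}.

Definition kcancellative (K : fieldType) (S : ksemigroup K) : Prop :=
  forall (a b : K) (x : S), sscale a x = sscale b x -> x <> szero S -> a = b.

(* x lambda y  iff  x = alpha y for some nonzero alpha; xi is the quotient map
   S -> S/lambda, which is a semigroup morphism, so
   xi u xi v xi w = xi u xi z  iff  (u v w) lambda (u z). *)
Definition klambda (K : fieldType) (S : ksemigroup K) (x y : S) : Prop :=
  exists a : K, a != 0 /\ x = sscale a y.

Section Reps.
Variables (K : fieldType) (G : groupoid) (S : ksemigroup K).
Local Notation "x ** y" := (smul x y) (at level 40, left associativity).

Definition partial_proj_rep (Gam : G -> S) : Prop :=
  forall x y : G, composable x y ->
    klambda (Gam (ginv x) ** Gam x ** Gam y) (Gam (ginv x) ** Gam (gmul x y)) /\
    klambda (Gam x ** Gam y ** Gam (ginv y)) (Gam (gmul x y) ** Gam (ginv y)).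

Definition standing_assumption (Gam : G -> S) : Prop :=
  forall x : G, Gam (gr x) ** Gam x = Gam x /\ Gam x ** Gam (gd x) = Gam x.

(* sigma is the factor set of Gam, viewed as a total map G x G -> K that is
   0 outside its domain {(x,y) in G^2 : Gam x Gam y <> 0}. *)
Definition factor_set_of (Gam : G -> S) (sigma : G -> G -> K) : Prop :=
  (forall x y : G, sigma x y != 0 <-> (composable x y /\ Gam x ** Gam y <> szero S)) /\
  (forall x y : G, composable x y -> Gam x ** Gam y <> szero S ->
     Gam (ginv x) ** Gam x ** Gam y = sscale (sigma x y) (Gam (ginv x) ** Gam (gmul x y)) /\
     Gam x ** Gam y ** Gam (ginv y) = sscale (sigma x y) (Gam (gmul x y) ** Gam (ginv y))).
End Reps.

Definition in_pm (K : fieldType) (G : groupoid) (sigma : G -> G -> K) : Prop :=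
  exists (S : ksemigroup K) (Gam : G -> S),
    kcancellative S /\ partial_proj_rep Gam /\ standing_assumption Gam /\
    factor_set_of Gam sigma.

(* idempotent element of the commutative semigroup pm(G) (pointwise product) *)
Definition idempotent_factor_set (K : fieldType) (G : groupoid) (sigma : G -> G -> K) : Prop :=
  in_pm sigma /\ (forall x y : G, sigma x y * sigma x y = sigma x y).

Definition in_dom (K : fieldType) (G : groupoid) (sigma : G -> G -> K) (x y : G) : Prop :=
  sigma x y != 0.

(* Main.v *)
Require Import Defs.
From mathcomp Require Import all_boot all_algebra.
From Stdlib Require Import FunctionalExtensionality PropExtensionality ProofIrrelevance ClassicalEpsilon.
Set Implicit Arguments. Unset Strict Implicit. Unset Printing Implicit Defensive.
Import GRing.Theory.
Local Open Scope ring_scope.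

Section GLemmas.
Variable G : groupoid.
Implicit Types x y z a b c : G.

Lemma gr_inv x : gr (ginv x) = gd x.
Proof. by rewrite /gr /gd ginvK. Qed.
Lemma gd_inv x : gd (ginv x) = gr x.
Proof. by rewrite /gr /gd ginvK. Qed.
Lemma gr_gd x : gr (gd x) = gd x.
Proof. exact: gr_d. Qed.
Lemma gd_gr x : gd (gr x) = gr x.
Proof. exact: gd_r. Qed.
Lemma gr_gr x : gr (gr x) = gr x.
Proof. by rewrite -[gr x]gd_inv gr_gd. Qed.
Lemma gd_gd x : gd (gd x) = gd x.
Proof. by rewrite -[gd x]gr_inv gd_gr. Qed.
Lemma mul_gd x : gmul x (gd x) = x.
Proof. exact: gmul_d. Qed.
Lemma mul_gr x : gmul (gr x) x = x.
Proof. exact: gr_mul_x. Qed.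
Lemma ginv_gd x : ginv (gd x) = gd x.
Proof.
have h := mul_gd (ginv (gd x)).
rewrite gd_inv gr_gd in h.
by rewrite -h; rewrite -{3}(gd_gd x).
Qed.
Lemma ginv_gr x : ginv (gr x) = gr x.
Proof. by rewrite -gd_inv ginv_gd. Qed.
Lemma gd_mulE x y : composable x y -> gd (gmul x y) = gd y.
Proof. exact: gd_mul. Qed.
Lemma gr_mulE x y : composable x y -> gr (gmul x y) = gr x.
Proof. exact: gr_mul. Qed.
Lemma assocE x y z : composable x y -> composable y z ->
  gmul (gmul x y) z = gmul x (gmul y z).
Proof. exact: gassoc. Qed.
Lemma cancelL x y : composable x y -> gmul (ginv x) (gmul x y) = y.
Proof. exact: gcancel_l. Qed.
Lemma cancelR x y : composable x y -> gmul (gmul x y) (ginv y) = x.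
Proof. exact: gcancel_r. Qed.

Lemma inv_mul x y : composable x y -> ginv (gmul x y) = gmul (ginv y) (ginv x).
Proof.
move=> h.
have c1 : composable (gmul x y) (ginv y) by rewrite /composable gd_mulE // gr_inv.
have c2 : composable (ginv y) (ginv x) by rewrite /composable gd_inv gr_inv.
set z := gmul x y; set w := gmul (ginv y) (ginv x).
have zw : gmul z w = gr x.
  by rewrite /w -assocE // /z cancelR.
have e1 : ginv z = gmul (ginv z) (gr z) by rewrite -gd_inv mul_gd.
have c3 : composable (ginv z) z by rewrite /composable gd_inv.
have c4 : composable z w by rewrite /composable /z gd_mulE // /w gr_mulE // gr_inv.
rewrite e1 /z gr_mulE // -zw -assocE //.
rewrite -/z -/(gd z) /z gd_mulE // -gr_inv.
by rewrite -(gr_mulE c2) mul_gr.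
Qed.

Lemma inv_invmul a b : gr a = gr b -> ginv (gmul (ginv a) b) = gmul (ginv b) a.
Proof. move=> h; rewrite inv_mul ?ginvK //; by rewrite /composable gd_inv h. Qed.

Lemma cancel3 a b c : gr a = gr b -> gr b = gr c ->
  gmul (gmul (ginv a) b) (gmul (ginv b) c) = gmul (ginv a) c.
Proof.
move=> hab hbc.
have c1 : composable (ginv a) b by rewrite /composable gd_inv hab.
have c2 : composable (ginv b) c by rewrite /composable gd_inv hbc.
have c3 : composable b (gmul (ginv b) c) by rewrite /composable gr_mulE // gr_inv.
rewrite assocE //.
by have := cancelL c2; rewrite ginvK => ->.
Qed.

Lemma transl x a b : composable x a -> composable x b ->
  gmul (ginv (gmul x a)) (gmul x b) = gmul (ginv a) b.
Proof.
move=> ha hb; rewrite inv_mul //.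
have c1 : composable (ginv a) (ginv x) by rewrite /composable gd_inv gr_inv.
have c2 : composable (ginv x) (gmul x b) by rewrite /composable gd_inv gr_mulE.
by rewrite assocE // cancelL.
Qed.
End GLemmas.

Section Closure.
Variables (G : groupoid) (K : fieldType) (sigma : G -> G -> K).
Hypothesis Hid : forall e : G, identity_elt e -> sigma e e = 1.
Hypothesis Hdom : forall x y : G, in_dom sigma x y ->
      composable x y /\
      in_dom sigma (gmul x y) (ginv y) /\
      in_dom sigma (ginv y) (ginv x) /\
      in_dom sigma x (gd x).
Local Notation D := (in_dom sigma).
Definition alive (z : G) := D z (gd z).
Definition T (a b c : G) := D (gmul (ginv a) b) (gmul (ginv b) c).

Lemma R1 x y : D x y -> D (gmul x y) (ginv y). Proof. by case/Hdom=> _ []. Qed.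
Lemma R2 x y : D x y -> D (ginv y) (ginv x). Proof. by case/Hdom=> _ [_ []]. Qed.
Lemma R3 x y : D x y -> alive x. Proof. by case/Hdom=> _ [_ []]. Qed.
Lemma Dcomp x y : D x y -> composable x y. Proof. by case/Hdom. Qed.

Lemma D_id x : D (gd x) (gd x).
Proof. have h : identity_elt (gd x) by exists x. by rewrite /in_dom (Hid h) GRing.oner_neq0. Qed.

Lemma alive_inv z : alive z -> alive (ginv z).
Proof.
move=> /R2; rewrite ginv_gd => /R1; rewrite ginvK.
rewrite -gr_inv mul_gr; exact: R3.
Qed.

Lemma D_rz z : alive z -> D (gr z) z.
Proof.
move=> /alive_inv; rewrite /alive gd_inv => /R2; by rewrite ginv_gr ginvK.
Qed.

Lemma D_zzinv z : alive z -> D z (ginv z).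
Proof. by move=> /D_rz /R1; rewrite mul_gr. Qed.

Section TL.
Variable r : G.
Variables a b c : G.
Hypotheses (ha : gr a = r) (hb : gr b = r) (hc : gr c = r).

Lemma Tperm1 : T a b c -> T c b a.
Proof.
move=> /R2; rewrite /T !inv_invmul //; congruence.
Qed.
Lemma Tperm2 : T a b c -> T a c b.
Proof.
move=> /R1; rewrite /T cancel3 ?inv_invmul //; congruence.
Qed.
Lemma Talive : T a b c -> alive (gmul (ginv a) b).
Proof. exact: R3. Qed.
Lemma Tdeg1 : alive (gmul (ginv a) c) -> T a a c.
Proof.
move=> /D_rz; rewrite /T gr_mulE ?gr_inv //.
by rewrite /composable gd_inv ha hc.
Qed.
Lemma Tdeg2 : alive (gmul (ginv a) b) -> T a b b.
Proof.
rewrite /T /alive gd_mulE //; by rewrite /composable gd_inv ha hb.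
Qed.
Lemma Tdeg3 : alive (gmul (ginv a) b) -> T a b a.
Proof.
move=> /D_zzinv; rewrite /T inv_invmul //; congruence.
Qed.
End TL.

Lemma alive_gd a : alive (gmul (ginv a) a).
Proof. rewrite /alive -/(gd a) gd_gd; exact: D_id. Qed.

Definition Consist (A : G -> Prop) := forall a b c, A a -> A b -> A c -> T a b c.

Lemma Consist_sub (A B : G -> Prop) : (forall z, A z -> B z) -> Consist B -> Consist A.
Proof. move=> h hB a b c ha hb hc; apply: hB; exact: h. Qed.

Lemma Consist3 e x w : gr e = gr x -> gr w = gr x -> T e x w ->
  Consist (fun z => z = e \/ z = x \/ z = w).
Proof.
set r := gr x => he hw t1.
have hx : gr x = r by [].
have t2 := Tperm2 he hx hw t1.
have t3 := Tperm1 he hx hw t1.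
have t4 := Tperm2 hw hx he t3.
have t5 := Tperm1 hw he hx t4.
have t6 := Tperm2 hx he hw t5.
have a1 := Talive t1. have a2 := Talive t2. have a3 := Talive t3.
have a4 := Talive t4. have a5 := Talive t5. have a6 := Talive t6.
have a7 := alive_gd e. have a8 := alive_gd x. have a9 := alive_gd w.
move=> a b c [->|[->|->]] [->|[->|->]] [->|[->|->]];
  first [ assumption
        | apply: (Tdeg1 (r:=r)); assumption
        | apply: (Tdeg2 (r:=r)); assumption
        | apply: (Tdeg3 (r:=r) (c:=e)); assumption ].
Qed.

End Closure.

Section Semi.
Variables (G : groupoid) (K : fieldType) (sigma : G -> G -> K).

Record Elt := MkElt { esc : K; eA : G -> Prop; eg : G; esc_nz : esc != 0;
  einv : forall a, eA a -> gr a = gr eg }.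

Lemma Elt_ext p q : esc p = esc q -> eg p = eg q -> (forall z, eA p z <-> eA q z) -> p = q.
Proof.
case: p => k A g nz iv; case: q => k' A' g' nz' iv' /= ek egq eAq.
subst k' g'.
have eA : A = A' by apply: functional_extensionality => z; apply: propositional_extensionality.
subst A'. f_equal; apply: proof_irrelevance.
Qed.

Local Notation Consist := (Consist sigma).

Definition mk (e : Elt) : option Elt :=
  if excluded_middle_informative (Consist (eA e)) then Some e else None.

Definition uniA (p q : Elt) : G -> Prop :=
  fun z => eA p z \/ exists b, eA q b /\ z = gmul (eg p) b.

Lemma prod_inv (p q : Elt) (h : composable (eg p) (eg q)) :
  forall a, uniA p q a -> gr a = gr (gmul (eg p) (eg q)).
Proof.
move=> a; rewrite gr_mulE //; case=> [/einv //|[b [hb ->]]].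
rewrite gr_mulE //; rewrite /composable h; exact: (esym (einv hb)).
Qed.

Definition prodE (p q : Elt) (h : composable (eg p) (eg q)) : Elt :=
  MkElt (mulf_neq0 (esc_nz p) (esc_nz q)) (prod_inv h).

Definition smulO (u v : option Elt) : option Elt :=
  match u, v with
  | Some p, Some q =>
    match excluded_middle_informative (composable (eg p) (eg q)) with
    | left h => mk (prodE h)
    | right _ => None
    end
  | _, _ => None
  end.

Definition scaleE (a : K) (h : a != 0) (p : Elt) : Elt :=
  MkElt (mulf_neq0 h (esc_nz p)) (@einv p).

Definition sscaleO (a : K) (u : option Elt) : option Elt :=
  match u with
  | None => None
  | Some p =>
    match excluded_middle_informative (a != 0) with
    | left h => Some (scaleE h p)
    | right _ => None
    end
  end.

Lemma K1 p q (h : composable (eg p) (eg q)) : Consist (eA (prodE h)) -> Consist (eA p).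
Proof. apply: (@Consist_sub _ _ sigma (eA p) (eA (prodE h))) => z hz; by left. Qed.

Lemma K2 p q (h : composable (eg p) (eg q)) : Consist (eA (prodE h)) -> Consist (eA q).
Proof.
move=> C a b c ha hb hc.
have cx : forall u, eA q u -> composable (eg p) u.
  by move=> u hu; rewrite /composable h (einv hu).
have := C (gmul (eg p) a) (gmul (eg p) b) (gmul (eg p) c).
rewrite /T !transl; try by apply: cx.
move=> H; apply: H; rewrite /= /uniA; right; [exists a | exists b | exists c]; by split.
Qed.

Lemma K3 p q r (h1 : composable (eg p) (eg q)) (h2 : composable (eg (prodE h1)) (eg r))
  (h3 : composable (eg q) (eg r)) (h4 : composable (eg p) (eg (prodE h3))) :
  prodE h2 = prodE h4.
Proof.
apply: Elt_ext => /=; first by rewrite mulrA.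
  by rewrite assocE.
move=> z; rewrite /uniA /=; split.
- case=> [[hz|[b [hb ->]]]|[c [hc ->]]].
  + by left.
  + by right; exists b; split => //; left.
  + right; exists (gmul (eg q) c); split; first by right; exists c.
    rewrite assocE //; by rewrite /composable h3 (einv hc).
- case=> [hz|[u [[hu|[c [hc ->]]] ->]]].
  + by left; left.
  + by left; right; exists u.
  + right; exists c; split => //.
    rewrite assocE //; by rewrite /composable h3 (einv hc).
Qed.

Lemma mkS e : Consist (eA e) -> mk e = Some e.
Proof. by rewrite /mk; case: excluded_middle_informative. Qed.
Lemma mkN e : ~ Consist (eA e) -> mk e = None.
Proof. by rewrite /mk; case: excluded_middle_informative. Qed.

Lemma prodE_irr p q (h h' : composable (eg p) (eg q)) : prodE h = prodE h'.
Proof. by rewrite (proof_irrelevance _ h h'). Qed.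

Lemma smul_mk p q (h : composable (eg p) (eg q)) : smulO (mk p) (mk q) = mk (prodE h).
Proof.
case: (excluded_middle_informative (Consist (eA p))) => cp; last first.
  rewrite (mkN cp) /= mkN // => H; apply: cp; exact: K1 H.
case: (excluded_middle_informative (Consist (eA q))) => cq; last first.
  rewrite (mkN cq) (mkS cp) /= mkN // => H; apply: cq; exact: K2 H.
rewrite (mkS cp) (mkS cq) /=; case: excluded_middle_informative => // h'.
by rewrite (prodE_irr h h').
Qed.

Lemma smul_Sc p q (h : composable (eg p) (eg q)) : smulO (Some p) (Some q) = mk (prodE h).
Proof. rewrite /=; case: excluded_middle_informative => // h'; by rewrite (prodE_irr h h'). Qed.
Lemma smul_Sn p q : ~ composable (eg p) (eg q) -> smulO (Some p) (Some q) = None.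
Proof. by rewrite /=; case: excluded_middle_informative. Qed.
Lemma smulO_r0 u : smulO u None = None. Proof. by case: u. Qed.

Lemma smulOA u v w : smulO (smulO u v) w = smulO u (smulO v w).
Proof.
case: u => [p|] //; case: v => [q|]; last by rewrite smulO_r0.
case: w => [r|]; last first.
  by rewrite !smulO_r0.
case: (excluded_middle_informative (composable (eg p) (eg q))) => hpq;
case: (excluded_middle_informative (composable (eg q) (eg r))) => hqr.
- have h2 : composable (eg (prodE hpq)) (eg r) by rewrite /= /composable gd_mulE.
  have h4 : composable (eg p) (eg (prodE hqr)) by rewrite /= /composable gr_mulE.
  rewrite (smul_Sc hpq) (smul_Sc hqr).
  case: (excluded_middle_informative (Consist (eA (prodE hpq)))) => c1;
  case: (excluded_middle_informative (Consist (eA (prodE hqr)))) => c2.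
  + by rewrite (mkS c1) (mkS c2) (smul_Sc h2) (smul_Sc h4) (K3 h2 h4).
  + rewrite (mkS c1) (mkN c2) (smul_Sc h2) /= mkN // => H.
    by rewrite (K3 h2 h4) in H; apply: c2; exact: K2 H.
  + rewrite (mkN c1) (mkS c2) (smul_Sc h4) /= mkN // => H.
    by rewrite -(K3 h2 h4) in H; apply: c1; exact: K1 H.
  + by rewrite (mkN c1) (mkN c2).
- rewrite (smul_Sc hpq) (smul_Sn hqr) smulO_r0.
  case: (excluded_middle_informative (Consist (eA (prodE hpq)))) => c1;
    last by rewrite (mkN c1).
  have hn : ~ composable (eg (prodE hpq)) (eg r) by rewrite /= /composable gd_mulE.
  by rewrite (mkS c1) (smul_Sn hn).
- rewrite (smul_Sn hpq) (smul_Sc hqr).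
  case: (excluded_middle_informative (Consist (eA (prodE hqr)))) => c2;
    last by rewrite (mkN c2).
  have hn : ~ composable (eg p) (eg (prodE hqr)) by rewrite /= /composable gr_mulE.
  by rewrite (mkS c2) (smul_Sn hn).
- by rewrite (smul_Sn hpq) (smul_Sn hqr).
Qed.

Lemma neq0F (c : K) : ~ (c != 0) -> c = 0.
Proof. by move=> /negP; rewrite negbK => /eqP. Qed.

Lemma sscale_zero a u : ~ (a != 0) -> sscaleO a u = None.
Proof. by case: u => [p|] //= H; case: excluded_middle_informative. Qed.

Lemma sscale_nz a p (h : a != 0) : sscaleO a (Some p) = Some (scaleE h p).
Proof.
rewrite /=; case: excluded_middle_informative => // h'.
by rewrite (proof_irrelevance _ h h').
Qed.

Lemma sscaleOA a b u : sscaleO a (sscaleO b u) = sscaleO (a * b) u.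
Proof.
case: u => [p|] //.
case: (excluded_middle_informative (b != 0)) => hb; last first.
  have hab : ~ (a * b != 0) by rewrite (neq0F hb) mulr0 eqxx.
  by rewrite (sscale_zero _ hb) (sscale_zero _ hab).
case: (excluded_middle_informative (a != 0)) => ha; last first.
  have hab : ~ (a * b != 0) by rewrite (neq0F ha) mul0r eqxx.
  by rewrite (sscale_nz _ hb) (sscale_zero _ ha) (sscale_zero _ hab).
rewrite (sscale_nz _ hb) (sscale_nz _ ha) (sscale_nz _ (mulf_neq0 ha hb)).
congr Some; apply: Elt_ext => //=; by rewrite mulrA.
Qed.

Lemma sscaleO1 u : sscaleO 1 u = u.
Proof.
case: u => [p|] //; rewrite (sscale_nz _ (oner_neq0 K)).
congr Some; apply: Elt_ext => //=; by rewrite mul1r.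
Qed.

Lemma sscaleO0 u : sscaleO 0 u = None.
Proof. apply: sscale_zero; by rewrite eqxx. Qed.

Lemma sscale_mullO a u v : sscaleO a (smulO u v) = smulO (sscaleO a u) v.
Proof.
case: (excluded_middle_informative (a != 0)) => ha; last first.
  by rewrite !(sscale_zero _ ha).
case: u => [p|] //; case: v => [q|]; last by rewrite !smulO_r0.
rewrite (sscale_nz _ ha).
case: (excluded_middle_informative (composable (eg p) (eg q))) => h; last first.
  by rewrite !smul_Sn.
rewrite (smul_Sc h) (smul_Sc (p:=scaleE ha p) h).
case: (excluded_middle_informative (Consist (eA (prodE h)))) => c; last first.
  by rewrite (mkN c) mkN.
rewrite (mkS c) mkS // (sscale_nz _ ha).
congr Some; apply: Elt_ext => //=; by rewrite mulrA.
Qed.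

Lemma sscale_mulrO a u v : sscaleO a (smulO u v) = smulO u (sscaleO a v).
Proof.
case: (excluded_middle_informative (a != 0)) => ha; last first.
  by rewrite !(sscale_zero _ ha) smulO_r0.
case: u => [p|] //; case: v => [q|]; last by rewrite !smulO_r0.
rewrite (sscale_nz _ ha).
case: (excluded_middle_informative (composable (eg p) (eg q))) => h; last first.
  by rewrite !smul_Sn.
rewrite (smul_Sc h) (smul_Sc (q:=scaleE ha q) h).
case: (excluded_middle_informative (Consist (eA (prodE h)))) => c; last first.
  by rewrite (mkN c) mkN.
rewrite (mkS c) mkS // (sscale_nz _ ha).
congr Some; apply: Elt_ext => //=; by rewrite mulrCA.
Qed.

Definition SG : ksemigroup K :=
  @KSemigroup K (option Elt) smulO None sscaleO smulOA (fun _ => erefl) smulO_r0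
    sscaleOA sscaleO1 sscale_mullO sscale_mulrO sscaleO0.

Lemma SG_canc : kcancellative SG.
Proof.
move=> a b u /= E nz; case: u E nz => [p|] // E _.
case: (excluded_middle_informative (a != 0)) => ha;
case: (excluded_middle_informative (b != 0)) => hb.
- move: E; rewrite (sscale_nz _ ha) (sscale_nz _ hb) => -[] /= /(mulIf (esc_nz p)) //.
- by move: E; rewrite (sscale_nz _ ha) (sscale_zero _ hb).
- by move: E; rewrite (sscale_nz _ hb) (sscale_zero _ ha).
- by rewrite (neq0F ha) (neq0F hb).
Qed.

End Semi.

Section Backward.
Variables (G : groupoid) (K : fieldType) (sigma : G -> G -> K).
Hypothesis Hid : forall e : G, identity_elt e -> sigma e e = 1.
Hypothesis H01 : forall x y : G, sigma x y = 0 \/ sigma x y = 1.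
Hypothesis Hdom : forall x y : G, in_dom sigma x y ->
      composable x y /\
      in_dom sigma (gmul x y) (ginv y) /\
      in_dom sigma (ginv y) (ginv x) /\
      in_dom sigma x (gd x).

Lemma geninv (x : G) : forall a, (a = gr x \/ a = x) -> gr a = gr x.
Proof. by move=> a [->|->] //; rewrite gr_gr. Qed.

Definition gen (x : G) : Elt G K := MkElt (oner_neq0 K) (@geninv x).

Definition Gam (x : G) : SG sigma := mk sigma (gen x).

Lemma ex2E (x u v z : G) :
  (exists b, (b = u \/ b = v) /\ z = gmul x b) = (z = gmul x u \/ z = gmul x v).
Proof.
apply: propositional_extensionality; split.
  by case=> b [[->|->] ->]; [left|right].
by case=> ->; [exists u | exists v]; split => //; [left|right].
Qed.

Lemma GamM x y (h : composable x y) :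
  smul (Gam x) (Gam y) = mk sigma (prodE (p:=gen x) (q:=gen y) h).
Proof. exact: smul_mk. Qed.

Lemma consGG x y (h : composable x y) :
  Consist sigma (eA (prodE (p:=gen x) (q:=gen y) h)) <-> in_dom sigma x y.
Proof.
have E : T sigma (gr x) x (gmul x y) = in_dom sigma x y.
  by rewrite /T ginv_gr mul_gr cancelL.
split.
- move=> C; rewrite -E; apply: C; rewrite /= /uniA /=.
  + by left; left.
  + by left; right.
  + by right; exists y; split => //; right.
- move=> D; rewrite -E in D.
  have C := Consist3 Hid Hdom (gr_gr x) (gr_mulE h) D.
  apply: (Consist_sub _ C) => z; rewrite /= /uniA /= ex2E.
  have -> : gmul x (gr y) = x by rewrite -h mul_gd.
  tauto.
Qed.

Lemma mul_rr (y : G) : gmul (gr y) (gr y) = gr y.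
Proof. by have := mul_gr (gr y); rewrite gr_gr. Qed.
Lemma mul_inv_gr (x : G) : gmul (ginv x) (gr x) = ginv x.
Proof. by rewrite -gd_inv mul_gd. Qed.

Lemma P1 x y (h : composable x y) :
  smulO sigma (smulO sigma (Gam (ginv x)) (Gam x)) (Gam y) =
  smulO sigma (Gam (ginv x)) (Gam (gmul x y)).
Proof.
have h1 : composable (eg (gen (ginv x))) (eg (gen x)) by rewrite /composable gd_inv.
have h2 : composable (eg (prodE (p:=gen (ginv x)) (q:=gen x) h1)) (eg (gen y)).
  by rewrite /= /composable -/(gd x) gd_gd.
have h3 : composable (eg (gen (ginv x))) (eg (gen (gmul x y))).
  by rewrite /= /composable gd_inv gr_mulE.
rewrite /Gam (smul_mk _ h1) (smul_mk _ h2) (smul_mk _ h3).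
congr mk; apply: Elt_ext => /=.
- by rewrite !mul1r.
- by rewrite assocE.
- move=> z; rewrite /uniA /= /uniA /= !ex2E.
  rewrite gr_inv gr_mulE // cancelL // mul_inv_gr -/(gd x) h mul_rr mul_gr.
  tauto.
Qed.

Lemma P2 x y (h : composable x y) :
  smulO sigma (smulO sigma (Gam x) (Gam y)) (Gam (ginv y)) =
  smulO sigma (Gam (gmul x y)) (Gam (ginv y)).
Proof.
have h2 : composable (eg (prodE (p:=gen x) (q:=gen y) h)) (eg (gen (ginv y))).
  by rewrite /= /composable gd_mulE // gr_inv.
have h3 : composable (eg (gen (gmul x y))) (eg (gen (ginv y))) by exact: h2.
have e1 : gmul (gmul x y) (gd y) = gmul x y by rewrite -(gd_mulE h) mul_gd.
have e2 : gmul x (gr y) = x by rewrite -h mul_gd.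
rewrite /Gam (smul_mk _ (p:=gen x) (q:=gen y) h) (smul_mk _ h2) (smul_mk _ h3).
congr mk; apply: Elt_ext => /=.
- by rewrite !mul1r.
- by [].
- move=> z; rewrite /uniA /= !ex2E.
  rewrite /uniA /= !ex2E gr_inv e1 e2 cancelR // gr_mulE //.
  tauto.
Qed.

Lemma S1 x : smulO sigma (Gam (gr x)) (Gam x) = Gam x.
Proof.
have h : composable (eg (gen (gr x))) (eg (gen x)) by rewrite /= /composable gd_gr.
rewrite /Gam (smul_mk _ h); congr mk; apply: Elt_ext => /=.
- by rewrite mul1r.
- by rewrite mul_gr.
- move=> z; rewrite /uniA /= !ex2E gr_gr mul_rr mul_gr; tauto.
Qed.

Lemma S2 x : smulO sigma (Gam x) (Gam (gd x)) = Gam x.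
Proof.
have h : composable (eg (gen x)) (eg (gen (gd x))) by rewrite /= /composable gr_gd.
rewrite /Gam (smul_mk _ h); congr mk; apply: Elt_ext => /=.
- by rewrite mul1r.
- by rewrite mul_gd.
- move=> z; rewrite /uniA /= !ex2E gr_gd mul_gd; tauto.
Qed.

End Backward.

Section Forward.
Variables (K : fieldType) (G : groupoid) (S : ksemigroup K).
Local Notation "x ** y" := (smul x y) (at level 40, left associativity).
Local Notation O := (szero S).

Lemma sc_zero0 (a : K) : sscale a O = O.
Proof. by have := sscale_mull a O O; rewrite !smul0r. Qed.

Lemma sc_zero (a : K) (W : S) : a != 0 -> sscale a W = O -> W = O.
Proof.
move=> ha E.
by rewrite -(sscale1 W) -(mulVf ha) -sscaleA E sc_zero0.
Qed.

Lemma lam_nz (X Y : S) : klambda X Y -> X <> O -> Y <> O.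
Proof. by case=> a [ha ->] nz Y0; apply: nz; rewrite Y0 sc_zero0. Qed.

Lemma lam_nz' (X Y : S) : klambda X Y -> Y <> O -> X <> O.
Proof. by case=> a [ha E] nz X0; apply: nz; apply: (sc_zero ha); rewrite -E. Qed.

Lemma lam_mull (X Y Z : S) : klambda X Y -> klambda (Z ** X) (Z ** Y).
Proof. by case=> a [ha ->]; exists a; split => //; rewrite sscale_mulr. Qed.

Lemma lam_mulr (X Y Z : S) : klambda X Y -> klambda (X ** Z) (Y ** Z).
Proof. by case=> a [ha ->]; exists a; split => //; rewrite sscale_mull. Qed.

Lemma nzL (U V : S) : U ** V <> O -> U <> O.
Proof. by move=> nz U0; apply: nz; rewrite U0 smul0l. Qed.
Lemma nzR (U V : S) : U ** V <> O -> V <> O.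
Proof. by move=> nz V0; apply: nz; rewrite V0 smul0r. Qed.

Variable Gam : G -> S.
Hypothesis P : partial_proj_rep Gam.
Hypothesis Std : standing_assumption Gam.

Lemma sandwich y : klambda (Gam y ** Gam (ginv y) ** Gam y) (Gam y).
Proof.
have c : composable y (ginv y) by rewrite /composable gr_inv.
have := (P c).2; rewrite ginvK -/(gr y) (Std y).1; done.
Qed.

Lemma fwd x y : composable x y -> Gam x ** Gam y <> O ->
  [/\ Gam (gmul x y) ** Gam (ginv y) <> O,
      Gam (ginv y) ** Gam (ginv x) <> O &
      Gam x ** Gam (gd x) <> O].
Proof.
move=> h nz.
have B : Gam x ** Gam y ** Gam (ginv y) <> O.
  move=> E.
  have : Gam x ** Gam y ** Gam (ginv y) ** Gam y = O by rewrite E smul0l.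
  rewrite !smulA -(smulA (Gam y)).
  case: (sandwich y) => a [ha ->].
  by rewrite -sscale_mulr => /(sc_zero ha).
have C : Gam (gmul x y) ** Gam (ginv y) <> O by apply: lam_nz (P h).2 B.
split => //; last by rewrite (Std x).2; exact: nzL nz.
set w := gmul x y in C *.
have cw : composable w (ginv y) by rewrite /composable /w gd_mulE // gr_inv.
have C1 : Gam w ** Gam (ginv w) ** Gam w ** Gam (ginv y) <> O.
  exact: lam_nz' (lam_mulr _ (sandwich w)) C.
have C2 : Gam w ** (Gam (ginv w) ** Gam (gmul w (ginv y))) <> O.
  apply: lam_nz (lam_mull _ (P cw).1) _.
  by rewrite !smulA in C1 *.
rewrite /w cancelR // in C2.
have C3 := nzR C2.
have cyx : composable (ginv y) (ginv x) by rewrite /composable gd_inv gr_inv.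
have := (P cyx).2; rewrite ginvK -inv_mul // -/w => L.
exact: nzL (lam_nz' L C3).
Qed.

End Forward.

Unset Implicit Arguments.

Theorem mainTheorem11 (G : groupoid) (K : fieldType) (sigma : G -> G -> K)
  (Hid : forall e : G, identity_elt e -> sigma e e = 1) :
  idempotent_factor_set sigma <->
  ((forall x y : G, sigma x y = 0 \/ sigma x y = 1) /\
   (forall x y : G, in_dom sigma x y ->
      composable x y /\
      in_dom sigma (gmul x y) (ginv y) /\
      in_dom sigma (ginv y) (ginv x) /\
      in_dom sigma x (gd x))).
Proof.
split.
- case=> [[S [Gm [_ [P [Std [FS1 FS2]]]]]] Hsq].
  split.
  + move=> x y; case: (eqVneq (sigma x y) 0) => [->|nz]; [by left| right].
    apply: (GRing.mulIf nz); by rewrite GRing.mul1r Hsq.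
  + move=> x y /FS1 [h nz].
    have [A B C] := fwd P Std h nz.
    split=> //; split; [|split]; apply/FS1; split => //.
    * by rewrite /composable gd_mulE // gr_inv.
    * by rewrite /composable gd_inv gr_inv.
    * by rewrite /composable gr_gd.
- case=> H01 Hdom.
  have FS1 : forall x y, sigma x y != 0 <->
      (composable x y /\ smul (Gam sigma x : SG sigma) (Gam sigma y) <> szero (SG sigma)).
    move=> x y; split.
    + move=> nz; have [h _] := Hdom x y nz; split=> //.
      rewrite /= /Gam (smul_mk _ (p:=gen K x) (q:=gen K y) h) mkS //.
      exact/(consGG Hid Hdom).
    + case=> h; rewrite /= /Gam (smul_mk _ (p:=gen K x) (q:=gen K y) h).
      case: (excluded_middle_informative (Consist sigma (eA (prodE (p:=gen K x) (q:=gen K y) h))))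
        => c; last by rewrite mkN.
      by move=> _; apply/(consGG Hid Hdom h).
  split; last first.
    by move=> x y; case: (H01 x y) => ->; rewrite ?GRing.mul0r ?GRing.mulr1.
  exists (SG sigma), (Gam sigma); split; [exact: SG_canc|]; split.
  + move=> x y h; split; exists 1; split; try exact: GRing.oner_neq0;
      rewrite /= sscaleO1; [exact: P1 | exact: P2].
  split.
  + by move=> x; split; rewrite /=; [exact: S1 | exact: S2].
  split; first exact: FS1.
  move=> x y h nz.
  have s1 : sigma x y = 1.
    case: (H01 x y) => // E; exfalso.
    by have := (FS1 x y).2 (conj h nz); rewrite E eqxx.
  rewrite s1 /= !sscaleO1; split; [exact: P1 | exact: P2].
Qed.
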